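(* Let $\mathcal{A}^{(+)}$ be the unital associative $\mathbb{C}$-algebra generated by $\nabla_0,\nabla_1,\nabla_2,\nabla_3$ with relations $[\nabla_0,\nabla_k]=[\nabla_\ell,\nabla_m]$ for every cyclic permutation $(k,\ell,m)$ of $(1,2,3)$. Let $L=L(\nabla_1,\nabla_2,\nabla_3)$ be the free Lie algebra on $\nabla_1,\nabla_2,\nabla_3$ (graded with generators in degree $1$), and let $\delta$ be the degree-one derivation of $L$ determined by $\delta(\nabla_k)=[\nabla_\ell,\nabla_m]$ for every cyclic permutation $(k,\ell,m)$ of $(1,2,3)$. Then $\mathcal{A}^{(+)}$ is isomorphic to the universal enveloping algebra of the semi-direct product graded Lie algebra $\mathbb{C}\delta\ltimes L$ (with $\delta$ of degree $1$ and $\nabla_0$ corresponding to $\delta$). *)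

(* Defs.v *)
From HB Require Import structures.
From mathcomp Require Import all_boot all_algebra.
From mathcomp Require Import complex.
From mathcomp Require Import Rstruct.
Set Implicit Arguments. Unset Strict Implicit. Unset Printing Implicit Defensive.
Import GRing.Theory.
Local Open Scope ring_scope.

Definition C : fieldType := (Rdefinitions.R)[i].

Section Defs.
Variable F : fieldType.

Definition is_lie (V : lmodType F) (br : V -> V -> V) : Prop :=
  [/\ (forall (a : F) (x y z : V), br (a *: x + y) z = a *: br x z + br y z),
      (forall (a : F) (x y z : V), br z (a *: x + y) = a *: br z x + br z y),
      (forall x : V, br x x = 0) &
      (forall x y z : V, br x (br y z) + br y (br z x) + br z (br x y) = 0)].

Definition is_linear (U V : lmodType F) (f : U -> V) : Prop :=
  forall (a : F) (x y : U), f (a *: x + y) = a *: f x + f y.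

Definition is_lie_hom (U V : lmodType F) (brU : U -> U -> U) (brV : V -> V -> V)
  (f : U -> V) : Prop :=
  is_linear f /\ forall x y : U, f (brU x y) = brV (f x) (f y).

Definition is_free_lie3 (L : lmodType F) (br : L -> L -> L) (g : 'I_3 -> L) : Prop :=
  is_lie br /\
  forall (M : lmodType F) (brM : M -> M -> M), is_lie brM ->
  forall h : 'I_3 -> M,
    (exists f : L -> M, is_lie_hom br brM f /\ forall k, f (g k) = h k) /\
    (forall f1 f2 : L -> M, is_lie_hom br brM f1 -> is_lie_hom br brM f2 ->
       (forall k, f1 (g k) = h k) -> (forall k, f2 (g k) = h k) ->
       forall x, f1 x = f2 x).

Definition is_derivation (L : lmodType F) (br : L -> L -> L) (D : L -> L) : Prop :=
  is_linear D /\ forall x y : L, D (br x y) = br (D x) y + br x (D y).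

(* Semi-direct product F d |x L for a derivation D of L: carrier F * L,
   (a, x) standing for a d + x, with bracket
   [a d + x, b d + y] = a D(y) - b D(x) + [x, y]. *)
Definition sdprod_br (L : lmodType F) (br : L -> L -> L) (D : L -> L)
  (u v : (F^o * L)%type) : (F^o * L)%type :=
  (0, u.1 *: D v.2 - v.1 *: D u.2 + br u.2 v.2).

Definition is_alg_hom (A B : algType F) (f : A -> B) : Prop :=
  [/\ (forall (a : F) (x y : A), f (a *: x + y) = a *: f x + f y),
      (forall x y : A, f (x * y) = f x * f y) & f 1 = 1].

Definition is_alg_iso (A B : algType F) (f : A -> B) : Prop :=
  is_alg_hom f /\ bijective f.

Definition is_uea (g : lmodType F) (br : g -> g -> g) (U : algType F)
  (iota : g -> U) : Prop :=
  [/\ is_linear iota ,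
      (forall x y : g, iota (br x y) = iota x * iota y - iota y * iota x) &
  forall (B : algType F) (phi : g -> B),
    is_linear phi ->
    (forall x y : g, phi (br x y) = phi x * phi y - phi y * phi x) ->
    (exists psi : U -> B, is_alg_hom psi /\ forall x, psi (iota x) = phi x) /\
    (forall psi1 psi2 : U -> B, is_alg_hom psi1 -> is_alg_hom psi2 ->
       (forall x, psi1 (iota x) = phi x) -> (forall x, psi2 (iota x) = phi x) ->
       forall u, psi1 u = psi2 u)].

(* Relations of A^(+): [n0, n_k] = [n_l, n_m] for (k,l,m) a cyclic permutation
   of the three indices (0-based: (k, k+1, k+2) mod 3). *)
Definition Aplus_rel (B : algType F) (b0 : B) (b : 'I_3 -> B) : Prop :=
  forall k : 'I_3,
    b0 * b k - b k * b0 = b (ordS k) * b (ordS (ordS k)) - b (ordS (ordS k)) * b (ordS k).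

Definition is_Aplus (A : algType F) (n0 : A) (n : 'I_3 -> A) : Prop :=
  Aplus_rel n0 n /\
  forall (B : algType F) (b0 : B) (b : 'I_3 -> B), Aplus_rel b0 b ->
    (exists psi : A -> B, is_alg_hom psi /\ psi n0 = b0 /\ forall k, psi (n k) = b k) /\
    (forall psi1 psi2 : A -> B, is_alg_hom psi1 -> is_alg_hom psi2 ->
       psi1 n0 = b0 -> (forall k, psi1 (n k) = b k) ->
       psi2 n0 = b0 -> (forall k, psi2 (n k) = b k) ->
       forall x, psi1 x = psi2 x).

End Defs.

(* Main.v *)
Require Import Defs.
From HB Require Import structures.
From mathcomp Require Import all_boot all_algebra.
From mathcomp Require Import complex.
From mathcomp Require Import Rstruct.
Import GRing.Theory.
Local Open Scope ring_scope.
Set Implicit Arguments. Unset Strict Implicit.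

Section Comm.
Variable F : fieldType.
Variable B : algType F.
Definition cm (x y : B) := x * y - y * x.

Lemma cmDl a x y z : cm (a *: x + y) z = a *: cm x z + cm y z.
Proof.
rewrite /cm mulrDl mulrDr -scalerAl -scalerAr scalerBr opprD addrACA //.
Qed.
Lemma cmDr a x y z : cm z (a *: x + y) = a *: cm z x + cm z y.
Proof.
rewrite /cm mulrDl mulrDr -scalerAl -scalerAr scalerBr opprD addrACA //.
Qed.
Lemma cmAl x y z : cm (x + y) z = cm x z + cm y z.
Proof. by have := cmDl 1 x y z; rewrite !scale1r. Qed.
Lemma cmAr x y z : cm z (x + y) = cm z x + cm z y.
Proof. by have := cmDr 1 x y z; rewrite !scale1r. Qed.
Lemma cmxx x : cm x x = 0. Proof. by rewrite /cm subrr. Qed.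
Lemma cmC x y : cm x y = - cm y x. Proof. by rewrite /cm opprB. Qed.
Lemma cmJ x y z : cm x (cm y z) + cm y (cm z x) + cm z (cm x y) = 0.
Proof.
rewrite /cm !mulrBr !mulrBl !mulrA !opprB !addrA.
rewrite (@GRing.add B).[ACl ((1*12)*(2*7)*(3*10)*(4*5)*(6*11)*(8*9))] !subrr !addNr !addr0 //.
Qed.
Lemma cmDer n x y : cm n (cm x y) = cm (cm n x) y + cm x (cm n y).
Proof.
apply/eqP; rewrite -subr_eq0.
rewrite /cm !mulrBr !mulrBl !mulrA !opprB ?opprD ?opprB !addrA.
rewrite !opprK (@GRing.add B).[ACl ((1*5)*(2*12)*(3*7)*(4*10)*(6*9)*(8*11))] !subrr !addNr !addr0 //.
Qed.
End Comm.
Lemma pairZD (F : fieldType) (V W : lmodType F) a (p r : V) (q s : W) :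
  a *: ((p, q) : (V * W)%type) + (r, s) = (a *: p + r, a *: q + s).
Proof. by []. Qed.
Lemma pairD (F : fieldType) (V W : lmodType F) (p r : V) (q s : W) :
  ((p, q) : (V * W)%type) + (r, s) = (p + r, q + s).
Proof. by []. Qed.
Lemma pair0 (F : fieldType) (V W : lmodType F) : (0 : (V * W)%type) = (0, 0).
Proof. by []. Qed.

Section Comm2.
Variable F : fieldType.
Variable B : algType F.
Lemma cm_lie : is_lie (@cm F B).
Proof. split; [exact: cmDl | exact: cmDr | exact: cmxx | exact: cmJ]. Qed.
End Comm2.

Section Dual.
Variable F : fieldType.
Variable V : lmodType F.
Variable c : V -> V -> V.
Hypothesis hc : is_lie c.

Lemma cAl x y z : c (x + y) z = c x z + c y z.
Proof. by case: hc => h _ _ _; have := h 1 x y z; rewrite !scale1r. Qed.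
Lemma cAr x y z : c z (x + y) = c z x + c z y.
Proof. by case: hc => _ h _ _; have := h 1 x y z; rewrite !scale1r. Qed.
Lemma cZl a x z : c (a *: x) z = a *: c x z.
Proof.
case: hc => h _ _ _; have := h a x 0 z; rewrite !addr0 => ->.
have := h 1 0 0 z; rewrite !scale1r addr0 => /(congr1 (fun t => t - c 0 z)).
by rewrite subrr addrK => <-; rewrite addr0.
Qed.
Lemma cxx x : c x x = 0. Proof. by case: hc. Qed.
Lemma cC x y : c x y = - c y x.
Proof.
apply/eqP; rewrite -subr_eq0 opprK; apply/eqP.
have := cxx (x + y); rewrite !cAl !cAr !cxx add0r addr0 => <-.
by rewrite addrC.
Qed.
Lemma cJ x y z : c x (c y z) + c y (c z x) + c z (c x y) = 0.
Proof. by case: hc. Qed.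

Definition brD (u v : (V * V)%type) : (V * V)%type :=
  (c u.1 v.1, c u.1 v.2 + c u.2 v.1).

Lemma brD_lie : is_lie brD.
Proof.
case: (hc) => hl hr _ _.
split.
- move=> a x y z; rewrite /brD /= pairZD; congr (_, _); first exact: hl.
  by rewrite !hl addrACA -scalerDr.
- move=> a x y z; rewrite /brD /= pairZD; congr (_, _); first exact: hr.
  by rewrite !hr addrACA -scalerDr.
- move=> x; rewrite /brD /= cxx (cC x.2) addrN //.
- move=> x y z; rewrite /brD /= !pairD cJ !cAr.
  rewrite /= !addrA.
  by rewrite (@GRing.add V).[ACl ((1*5*9)*(2*6*7)*(3*4*8))] !cJ !addr0.
Qed.
End Dual.

Section Lin.
Variable F : fieldType.
Variables U V : lmodType F.
Variable f : U -> V.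
Hypothesis hf : is_linear f.
Lemma lin0 : f 0 = 0.
Proof.
have := hf 1 0 0; rewrite scale1r addr0 => /(congr1 (fun t => t - f 0)).
by rewrite subrr addrK scale1r => /esym.
Qed.
Lemma linD x y : f (x + y) = f x + f y.
Proof. by have := hf 1 x y; rewrite !scale1r. Qed.
Lemma linZ a x : f (a *: x) = a *: f x.
Proof. by have := hf a x 0; rewrite !addr0 lin0 addr0 => ->. Qed.
Lemma linN x : f (- x) = - f x.
Proof. by rewrite -scaleN1r linZ scaleN1r. Qed.
Lemma linB x y : f (x - y) = f x - f y.
Proof. by rewrite linD linN. Qed.
End Lin.

Lemma alg_hom_comp (F : fieldType) (A B E : algType F) (f : A -> B) (g : B -> E) :
  is_alg_hom f -> is_alg_hom g -> is_alg_hom (g \o f).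
Proof.
move=> [f1 f2 f3] [g1 g2 g3]; split => /=.
- by move=> a x y; rewrite f1 g1.
- by move=> x y; rewrite f2 g2.
- by rewrite f3 g3.
Qed.

Lemma alg_hom_id (F : fieldType) (A : algType F) : is_alg_hom (@id A).
Proof. by split. Qed.

Theorem mainTheorem9
  :
  forall (A : algType C) (n0 : A) (n : 'I_3 -> A), is_Aplus n0 n ->
  forall (L : lmodType C) (br : L -> L -> L) (g : 'I_3 -> L), is_free_lie3 br g ->
  forall (D : L -> L), is_derivation br D ->
  (forall k : 'I_3, D (g k) = br (g (ordS k)) (g (ordS (ordS k)))) ->
  forall (U : algType C) (iota : (C^o * L)%type -> U), is_uea (sdprod_br br D) iota ->
  exists f : A -> U,
    [/\ is_alg_iso f, f n0 = iota (1, 0) & forall k : 'I_3, f (n k) = iota (0, g k)].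
Proof.
move=> A n0 n [Arel Auniv] L br g [Llie Lfree] D [Dlin Dder] Dg U iota [ilin ibr Uuniv].
case: (Llie) => brl brr _ _.
have br0l z : br 0 z = 0.
  by apply: (@lin0 _ _ _ (br^~ z)) => a x y; exact: brl.
have D0 : D 0 = 0 := lin0 Dlin.
have relU : Aplus_rel (iota (1, 0)) (fun k => iota (0, g k)).
  move=> k /=; rewrite -!ibr /sdprod_br /=.
  by rewrite !scale0r scale1r ?D0 ?br0l ?subr0 ?addr0 ?add0r Dg.
have [[f [fhom [f0 fk]]] _] := Auniv U _ _ relU.
case: (fhom) => f1 f2 f3.
have [[psi [[psil psib] psig]] _] := Lfree A (@cm _ A) (@cm_lie _ A) n.
have psiD x : psi (D x) = cm n0 (psi x).
  have [_ uniq] := Lfree (A * A)%type (brD (@cm _ A)) (brD_lie (@cm_lie _ A))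
     (fun k => (n k, cm n0 (n k))).
  have h1 : is_lie_hom br (brD (@cm _ A)) (fun x => (psi x, psi (D x))).
    split.
      by move=> a y z /=; rewrite Dlin !psil pairZD.
    move=> y z; rewrite /brD /= Dder (linD psil) !psib.
    by rewrite [cm _ (psi (D z)) + _]addrC.
  have h2 : is_lie_hom br (brD (@cm _ A)) (fun x => (psi x, cm n0 (psi x))).
    split.
      by move=> a y z /=; rewrite psil cmDr pairZD.
    move=> y z; rewrite /brD /= psib cmDer.
    by rewrite addrC.
  have g1 k : (fun x => (psi x, psi (D x))) (g k) = (n k, cm n0 (n k)).
    by rewrite /= psig Dg psib !psig /cm Arel.
  have g2 k : (fun x => (psi x, cm n0 (psi x))) (g k) = (n k, cm n0 (n k)).
    by rewrite /= psig.
  by have := uniq _ _ h1 h2 g1 g2 x => /(congr1 snd).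
pose phi (u : (C^o * L)%type) : A := u.1 *: n0 + psi u.2.
have philin : is_linear phi.
  move=> a u v; rewrite /phi /= psil scalerDl scalerDr addrACA scalerA //.
have phibr u v : phi (sdprod_br br D u v) = phi u * phi v - phi v * phi u.
  rewrite /phi /sdprod_br /= scale0r add0r (linD psil) (linB psil) !(linZ psil).
  rewrite !psiD psib -/(cm _ _) !cmDl !cmDr cmxx scaler0 add0r.
  by rewrite [cm (psi u.2) n0]cmC scalerN !addrA /cm.
have [[h [hhom hphi]] _] := Uuniv A phi philin phibr.
have fpsi x : f (psi x) = iota (0, x).
  have [_ uniq] := Lfree U (@cm _ U) (@cm_lie _ U) (fun k => iota (0, g k)).
  have h1 : is_lie_hom br (@cm _ U) (f \o psi).
    split.
      by move=> a y z /=; rewrite psil f1.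
    by move=> y z /=; rewrite psib /cm (linB f1) !f2.
  have h2 : is_lie_hom br (@cm _ U) (fun x => iota (0, x)).
    split.
      by move=> a y z; rewrite -ilin pairZD scaler0 add0r.
    move=> y z; rewrite /cm -ibr /sdprod_br /= !scale0r subrr add0r //.
  have g1 k : (f \o psi) (g k) = iota (0, g k) by rewrite /= psig fk.
  exact: (uniq _ _ h1 h2 g1 (fun k => erefl) x).
have fh u : f (h u) = u.
  have [_ uniq] := Uuniv U iota ilin ibr.
  have e1 x : (f \o h) (iota x) = iota x.
    rewrite /= hphi /phi (linD f1) (linZ f1) f0 fpsi -ilin pairZD.
    case: x => x1 x2 /=; congr (iota (_, _)); last by rewrite scaler0 add0r.
    by rewrite addr0; exact: mulr1.
  exact: (uniq _ _ (alg_hom_comp hhom fhom) (@alg_hom_id _ U) e1 (fun x => erefl) u).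
have hf a : h (f a) = a.
  have [_ uniq] := Auniv A n0 n Arel.
  have e0 : (h \o f) n0 = n0.
    by rewrite /= f0 hphi /phi /= scale1r (lin0 psil) addr0.
  have ek k : (h \o f) (n k) = n k.
    by rewrite /= fk hphi /phi /= scale0r add0r psig.
  exact: (uniq _ _ (alg_hom_comp fhom hhom) (@alg_hom_id _ A) e0 ek erefl (fun k => erefl) a).
exists f; split => //; split => //; exact: (Bijective hf fh).
Qed.
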